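(* Let $Q$ be a quiver whose underlying unoriented graph is a tree, and let $\mathbb V$ be an indecomposable representation of $Q$ over $\mathbb{F}_1$. Then every entry of the dimension vector $(\dim V_i)_{i\in I}$ is $0$ or $1$, the set of vertices $i$ with $\dim V_i=1$ spans a connected subgraph of $Q$, and every edge map between two one-dimensional spaces is an isomorphism. Consequently indecomposable representations of $Q$ (up to isomorphism) correspond bijectively to nonempty connected subgraphs of $Q$.
   Context: $\mathrm{Vect}_{\mathbb{F}_1}$: finite pointed sets $(V,0_V)$ with pointed maps injective on the complement of the preimage of the base point; $\dim V=|V|-1$; $V\oplus W$ is $V\sqcup W$ with base points identified. A representation $\mathbb V=(V_i,f_h)$ of a quiver $Q$ (vertices $I$, edges $E$, $h'$/$h''$ source/target) over $\mathbb{F}_1$ consists of $V_i\in\mathrm{Vect}_{\mathbb{F}_1}$ and morphisms $f_h:V_{h'}\to V_{h''}$; direct sums are vertexwise; $\mathbb V$ is indecomposable if nonzero and not a direct sum of two nonzero representations. A quiver is a tree if its underlying unoriented graph contains no cycles and no multiple edges. The dimension vector of $\mathbb V$ is $(\dim V_i)_{i\in I}$. *)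

(* Defs.v *)
From mathcomp Require Import all_boot.
Set Implicit Arguments. Unset Strict Implicit. Unset Printing Implicit Defensive.

(* A (finite) quiver: vertex type I, edge type E, source s = h', target t = h''. *)

Section Quiver.
Variables (I E : finType) (s t : E -> I).

Definition joins (h : E) (i j : I) : bool :=
  ((s h == i) && (t h == j)) || ((s h == j) && (t h == i)).

(* A cycle in the underlying unoriented (multi)graph: pairwise distinct vertices
   v_0,...,v_n and pairwise distinct edges e_0,...,e_n with e_k joining v_k and
   v_{k+1 mod n+1}.  (n = 0: a loop; n = 1: a pair of parallel edges.) *)
Definition has_cycle : Prop :=
  exists n (v : 'I_n.+1 -> I) (e : 'I_n.+1 -> E),
    injective v /\ injective e /\ forall k, joins (e k) (v k) (v (ordS k)).

Definition no_multiple_edges : Prop :=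
  forall h h' i j, joins h i j -> joins h' i j -> h = h'.

Definition is_tree : Prop := ~ has_cycle /\ no_multiple_edges.

Definition adj_in (S : {set I}) : rel I :=
  fun i j => [&& i \in S, j \in S & [exists h, joins h i j]].

Definition connected_in (S : {set I}) : Prop :=
  forall i j, i \in S -> j \in S -> connect (adj_in S) i j.

(* An object (V, 0_V) of Vect_F1 is encoded by the finite set V \ {0_V} of its
   nonzero elements; a pointed morphism f : V -> W injective off f^{-1}(0_W)
   is encoded by the partial map V\{0} -> option (W\{0}) (None = 0_W) that is
   injective on the elements it does not send to 0.  dim V = #|V \ {0}|. *)
Record F1rep := {
  sp : I -> finType;
  mp : forall h : E, sp (s h) -> option (sp (t h));
  mp_inj : forall h (x y : sp (s h)) z, mp x = Some z -> mp y = Some z -> x = y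
}.

Definition dimv (V : F1rep) (i : I) : nat := #|sp V i|.

Definition nonzero_rep (V : F1rep) : Prop := exists i, 0 < dimv V i.

Definition rep_iso (V W : F1rep) : Prop :=
  exists phi : forall i, sp V i -> sp W i,
    (forall i, bijective (phi i)) /\
    (forall h (x : sp V (s h)), omap (phi (t h)) (mp x) = mp (phi (s h) x)).

(* direct sum: vertexwise wedge sum, i.e. disjoint union of nonzero elements *)
Definition dsum_map (V W : F1rep) (h : E) (x : (sp V (s h) + sp W (s h))%type)
  : option (sp V (t h) + sp W (t h))%type :=
  match x with
  | inl a => omap inl (mp a)
  | inr b => omap inr (mp b)
  end.

Lemma dsum_map_inj (V W : F1rep) h x y z :
  @dsum_map V W h x = Some z -> @dsum_map V W h y = Some z -> x = y.
Proof.
case: x => [a|b]; case: y => [a'|b'] /=.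
- case Ea: (mp a) => [u|] //=; case Eb: (mp a') => [u'|] //= [<-] [E1].
  by rewrite (mp_inj Ea (etrans Eb (congr1 Some E1))).
- by case: (mp a) => //= ? [<-]; case: (mp b').
- by case: (mp b) => //= ? [<-]; case: (mp a').
- case Ea: (mp b) => [u|] //=; case Eb: (mp b') => [u'|] //= [<-] [E1].
  by rewrite (mp_inj Ea (etrans Eb (congr1 Some E1))).
Qed.

Definition dsum (V W : F1rep) : F1rep :=
  {| sp := fun i => (sp V i + sp W i)%type;
     mp := @dsum_map V W;
     mp_inj := @dsum_map_inj V W |}.

Definition indecomposable (V : F1rep) : Prop :=
  nonzero_rep V /\
  ~ (exists W1 W2, nonzero_rep W1 /\ nonzero_rep W2 /\ rep_iso V (dsum W1 W2)).

Definition rep_support (V : F1rep) : {set I} := [set i | 0 < dimv V i].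

End Quiver.

(* Main.v *)
Require Import Defs.
From mathcomp Require Import all_boot.
From Stdlib Require Import Classical ClassicalEpsilon Eqdep_dec Lia.
Set Implicit Arguments. Unset Strict Implicit. Unset Printing Implicit Defensive.

Section Graph.
Variables (I E : finType) (s t : E -> I).

Lemma joinsC h i j : joins s t h i j = joins s t h j i.
Proof. by rewrite /joins orbC. Qed.

Lemma joins_st h : joins s t h (s h) (t h).
Proof. by rewrite /joins !eqxx. Qed.

Lemma joins_mem h i j k l : joins s t h i j -> joins s t h k l -> (i == k) || (i == l).
Proof.
rewrite /joins => /orP[]/andP[/eqP E1 /eqP E2] /orP[]/andP[/eqP E3 /eqP E4];
  subst; by rewrite eqxx ?orbT.
Qed.

Fixpoint wk (a : I) (vs : seq I) (es : seq E) : Prop :=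
  match vs, es with
  | [::], [::] => True
  | b :: vs', e :: es' => joins s t e a b /\ wk b vs' es'
  | _, _ => False
  end.

Lemma wk_mem a vs es e : wk a vs es -> e \in es ->
  exists c d, [/\ c \in a :: vs, d \in vs & joins s t e c d].
Proof.
elim: vs es a => [|b vs IH] [|e' es] a //= [J W].
rewrite inE => /orP[/eqP->|He].
- by exists a, b; rewrite !inE !eqxx ?orbT.
- have [c [d [Hc Hd Jcd]]] := IH _ _ W He.
  by exists c, d; split => //; rewrite inE ?Hc ?Hd ?orbT.
Qed.

Lemma wk_uniq a vs es : wk a vs es -> uniq (a :: vs) -> uniq es.
Proof.
elim: vs es a => [|b vs IH] [|e es] a //= [J W] /andP[Ha Hu].
rewrite (IH _ _ W Hu) andbT.
apply/negP => He.
have [c [d [Hc Hd Jcd]]] := wk_mem W He.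
move: Ha; case/orP: (joins_mem J Jcd) => /eqP->.
  by rewrite Hc.
by rewrite inE Hd orbT.
Qed.

Lemma wk_size a vs es : wk a vs es -> size es = size vs.
Proof. by elim: vs es a => [|b vs IH] [|e es] a //= [_ /IH ->]. Qed.

Lemma wk_nth a vs es i x0 e0 : wk a vs es -> i < size vs ->
  joins s t (nth e0 es i) (nth x0 (a :: vs) i) (nth x0 vs i).
Proof.
elim: vs es a i => [|b vs IH] [|e es] a [|i] //= [J W] Hi.
  done. exact: (IH es b i W Hi).
Qed.

Lemma cycle_of a vs es f : uniq (a :: vs) -> wk a vs es ->
  joins s t f (last a vs) a -> (size vs != 1) || (es != [:: f]) -> has_cycle s t.
Proof.
move=> Hu W Jf Hc.
have Hes := wk_uniq W Hu.
have Hsz := wk_size W.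
have Hf : f \notin es.
  apply/negP => Hf.
  case: vs es W Hu Jf Hc Hsz Hes Hf => [|b vs] [|e es] //= [J W] /andP[Ha Hu] Jf Hc Hsz Hes.
  rewrite inE => /orP[/eqP Efe|Hf].
  - subst e.
    have /orP[/eqP El|/eqP El] := joins_mem Jf J.
      by move: Ha; rewrite -El mem_last.
    case: vs W Ha Hu Jf Hc Hsz Hes El => [|c vs] W Ha Hu Jf Hc Hsz Hes El.
      by case: es W Hc {Hsz Hes} => //=; rewrite eqxx.
    by move: Hu => /= /andP[]; rewrite -El /= mem_last.
  - have [c [d [Hc' Hd Jcd]]] := wk_mem W Hf.
    rewrite joinsC in Jf.
    move: Ha; case/orP: (joins_mem Jf Jcd) => /eqP->; first by rewrite Hc'.
    by rewrite inE Hd orbT.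
pose n := size vs.
exists n, (fun k : 'I_n.+1 => nth a (a :: vs) k), (fun k : 'I_n.+1 => nth f (rcons es f) k).
split; [|split].
- move=> k l /eqP; rewrite nth_uniq //=; by move/eqP/val_inj.
- move=> k l /eqP; rewrite nth_uniq ?size_rcons ?Hsz ?ltn_ord ?rcons_uniq ?Hf ?Hes //; by move/eqP/val_inj.
- move=> k.
  have := ltn_ord k; rewrite ltnS leq_eqVlt => /orP[/eqP Ek|Lk].
  + have -> : (ordS k : nat) = 0.
      by rewrite /= Ek modnn.
    rewrite nth_rcons Hsz Ek ltnn eqxx /=.
    by rewrite -[n]/((size (a :: vs)).-1) nth_last.
  + have -> : (ordS k : nat) = k.+1.
      by rewrite /= modn_small // ltnS.
    rewrite nth_rcons Hsz Lk /=.
    exact: wk_nth W Lk.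
Qed.

End Graph.

Lemma tagged_inj (I : eqType) (T_ : I -> Type) i (a b : T_ i) :
  existT T_ i a = existT T_ i b -> a = b.
Proof. apply: inj_pair2_eq_dec. move=> x y; case: (x =P y); [left|right]. done. done. Qed.

Section Walks.
Variables (I E : finType) (s t : E -> I).
Hypothesis HQ : ~ has_cycle s t.
Variable V : F1rep s t.

Definition X := {i : I & sp V i}.
Definition tg i (a : sp V i) : X := existT _ i a.

Definition step h (x y : X) : Prop :=
  exists (a : sp V (s h)) (b : sp V (t h)), [/\ mp a = Some b, x = tg a & y = tg b].
Definition rl h x y := step h x y \/ step h y x.

Lemma rl_sym h x y : rl h x y -> rl h y x.
Proof. by case=> ?; [right|left]. Qed.

Lemma rl_joins h x y : rl h x y -> joins s t h (tag x) (tag y).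
Proof.
case=> [[a [b [_ -> ->]]]|[a [b [_ -> ->]]]] /=; rewrite ?joins_st //.
by rewrite joinsC joins_st.
Qed.

Lemma no_loop h : s h != t h.
Proof.
apply/negP => /eqP E1; apply: HQ.
apply: (@cycle_of _ _ s t (s h) [::] [::] h) => //=.
by rewrite {2}E1 joins_st.
Qed.

Fixpoint ewk (x : X) (ps : seq (E * X)) : Prop :=
  match ps with
  | [::] => True
  | p :: ps' => rl p.1 x p.2 /\ ewk p.2 ps'
  end.

Definition lst x (ps : seq (E * X)) := last x (map snd ps).

Lemma ewk_cat x p1 p2 : ewk x (p1 ++ p2) <-> ewk x p1 /\ ewk (lst x p1) p2.
Proof.
elim: p1 x => [|p p1 IH] x /=; first by split=> // [[]].
rewrite IH; split; [by case=> ? []|by case=> [[]]].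
Qed.

Lemma lst_cat x p1 p2 : lst x (p1 ++ p2) = lst (lst x p1) p2.
Proof. by rewrite /lst map_cat last_cat. Qed.

Lemma lst_rcons x ps p : lst x (rcons ps p) = p.2.
Proof. by rewrite /lst map_rcons last_rcons. Qed.

Definition tgs (ps : seq (E * X)) := map (fun p => tag p.2) ps.

Lemma last_tgs x ps : last (tag x) (tgs ps) = tag (lst x ps).
Proof. by elim: ps x => //= p ps IH x; rewrite IH. Qed.

Lemma ewk_wk x ps : ewk x ps -> wk s t (tag x) (tgs ps) (map fst ps).
Proof.
elim: ps x => //= p ps IH x [R W]; split; [exact: rl_joins|exact: IH].
Qed.

Lemma loop1 x ps : tag x \in tgs ps ->
  exists p2 p3, [/\ ps = p2 ++ p3, p2 != [::] & tag (lst x p2) = tag x].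
Proof.
elim: ps => //= p ps IH; rewrite inE => /orP[/eqP E1|H].
  by exists [:: p], ps.
have [p2 [p3 [-> N E2]]] := IH H.
exists (p :: p2), p3; split => //.
by case: p2 N E2.
Qed.

Lemma loop2 x ps : ~~ uniq (tag x :: tgs ps) ->
  exists p1 p2 p3, [/\ ps = p1 ++ p2 ++ p3, p2 != [::] &
                     tag (lst (lst x p1) p2) = tag (lst x p1)].
Proof.
elim: ps x => //= p ps IH x; rewrite negb_and negbK => /orP[H|H].
  have [p2 [p3 [E1 N E2]]] := @loop1 x (p :: ps) H.
  by exists [::], p2, p3.
have [p1 [p2 [p3 [-> N E2]]]] := IH _ H.
by exists (p :: p1), p2, p3.
Qed.


Lemma dim_aux n : forall x ps, size ps < n -> ewk x ps -> tag (lst x ps) = tag x -> lst x ps = x.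
Proof.
elim: n => // n IHn x ps.
case/lastP: ps => [|q [f y]] //= Hs W Et.
rewrite lst_rcons /= in Et *.
have Hq : size q < n by rewrite size_rcons in Hs.
case: (boolP (uniq (tag x :: tgs q))) => Hu.
  move: W; rewrite -cats1 ewk_cat /= => [[Wq [Rf _]]].
  case: (boolP ((size (tgs q) != 1) || (map fst q != [:: f]))) => Hc.
    exfalso; apply: HQ; apply: (cycle_of Hu (ewk_wk Wq) _ Hc).
    by rewrite last_tgs -Et; apply: rl_joins.
  move: Hc; rewrite negb_or !negbK size_map => /andP[/eqP S1 /eqP M1].
  case: q Wq Rf Hs S1 M1 Hu Hq => [|[f' z] [|]] //= [R1 _] Rf _ _ [Ef] _ _; subst f'.
  rewrite /lst /= in Rf.
  case: R1 => [[a [b [Eab E3 E4]]]|[a [b [Eab E3 E4]]]]; subst x z;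
  case: Rf => [[a' [b' [Eab' E1 E2]]]|[a' [b' [Eab' E1 E2]]]].
  - by have /= E5 := congr1 tag E1; move: (no_loop f); rewrite E5 eqxx.
  - rewrite E1; have E6 := tagged_inj E2; subst b'.
    by rewrite (mp_inj Eab Eab').
  - rewrite E2; have E6 := tagged_inj E1; subst a'.
    by move: Eab'; rewrite Eab => -[->].
  - by have /= E5 := congr1 tag E2; move: (no_loop f); rewrite E5 eqxx.
have [p1 [p2 [p3 [Eq N E2]]]] := loop2 Hu.
have Eps : rcons q (f, y) = p1 ++ p2 ++ rcons p3 (f, y) by rewrite Eq !rcons_cat.
rewrite Eps in W.
move: W => /ewk_cat [W1] /ewk_cat [W2 W3].
have Hp2 : 0 < size p2 by rewrite lt0n size_eq0.
rewrite Eq !size_cat in Hq.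
have L2 := IHn _ _ (leq_ltn_trans (leq_trans (leq_addr _ _) (leq_addl _ _)) Hq) W2 E2.
rewrite L2 in W3.
have W' : ewk x (p1 ++ rcons p3 (f, y)) by apply/ewk_cat.
have := IHn _ _ _ W'; rewrite lst_cat lst_rcons /=; apply => //.
rewrite size_cat size_rcons.
by apply: leq_ltn_trans Hq; rewrite leq_add2l -add1n leq_add2r.
Qed.

Lemma dim_walk x ps : ewk x ps -> tag (lst x ps) = tag x -> lst x ps = x.
Proof. exact: (@dim_aux (size ps).+1). Qed.

Lemma short_aux n : forall x ps, size ps < n -> ewk x ps ->
  exists ps', [/\ ewk x ps', lst x ps' = lst x ps & uniq (tag x :: tgs ps')].
Proof.
elim: n => // n IHn x ps Hs W.
case: (boolP (uniq (tag x :: tgs ps))) => Hu; first by exists ps.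
have [p1 [p2 [p3 [Eq N E2]]]] := loop2 Hu.
rewrite Eq in W.
move: W => /ewk_cat [W1] /ewk_cat [W2 W3].
have L2 := dim_walk W2 E2.
rewrite L2 in W3.
have W' : ewk x (p1 ++ p3) by apply/ewk_cat.
have Hp2 : 0 < size p2 by rewrite lt0n size_eq0.
rewrite Eq !size_cat in Hs.
have [|ps' [Wp Lp Up]] := IHn _ _ _ W'.
  rewrite size_cat -ltnS; apply: leq_ltn_trans Hs.
  by rewrite -addnS leq_add2l -add1n leq_add2r.
exists ps'; split => //.
by rewrite Lp Eq !lst_cat L2.
Qed.

Lemma short_walk x ps : ewk x ps ->
  exists ps', [/\ ewk x ps', lst x ps' = lst x ps & uniq (tag x :: tgs ps')].
Proof. exact: (@short_aux (size ps).+1). Qed.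

End Walks.

Section Split.
Variables (I E : finType) (s t : E -> I) (V : F1rep s t).
Variable Q : forall i, pred (sp V i).
Hypothesis closedQ : forall h (a : sp V (s h)) b, mp a = Some b -> Q a = Q b.

Definition subsp i : finType := ({x : sp V i | Q x} : finType).

Definition mpS h (x : subsp (s h)) : option (subsp (t h)) :=
  obind (fun y => insub y) (mp (val x)).

Lemma mpS_some h (x : subsp (s h)) z : mpS x = Some z -> mp (val x) = Some (val z).
Proof.
rewrite /mpS; case: (mp (val x)) => //= u.
by case: insubP => // u' _ <- [->].
Qed.

Lemma mpS_inj h (x y : subsp (s h)) z : mpS x = Some z -> mpS y = Some z -> x = y.
Proof.
move=> /mpS_some Ex /mpS_some Ey; apply: val_inj; exact: mp_inj Ex Ey.
Qed.

Definition subrep : F1rep s t := {| sp := subsp; mp := mpS; mp_inj := mpS_inj |}.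

Lemma subrep_nz i (a : sp V i) : Q a -> nonzero_rep subrep.
Proof. by move=> qa; exists i; apply/card_gt0P; exists (exist _ a qa). Qed.

End Split.

Section Split2.
Variables (I E : finType) (s t : E -> I) (V : F1rep s t).
Variable Q : forall i, pred (sp V i).
Hypothesis closedQ : forall h (a : sp V (s h)) b, mp a = Some b -> Q a = Q b.

Definition bdec (b : bool) : {b} + {~~ b} :=
  if b as b' return {b'} + {~~ b'} then left erefl else right erefl.

Definition nQ i : pred (sp V i) := fun x => ~~ Q x.

Lemma closed_nQ h (a : sp V (s h)) b : mp a = Some b -> nQ a = nQ b.
Proof. by move/closedQ; rewrite /nQ => ->. Qed.

Definition splitf i (x : sp V i) : (subsp Q i + subsp nQ i)%type :=
  match bdec (Q x) with
  | left q => inl (exist _ x q)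
  | right nq => inr (exist _ x nq)
  end.

Definition unsplit i (y : (subsp Q i + subsp nQ i)%type) : sp V i :=
  match y with inl u => val u | inr u => val u end.

Lemma splitK i : cancel (@splitf i) (@unsplit i).
Proof. by move=> x; rewrite /splitf; case: bdec. Qed.

Lemma unsplitK i : cancel (@unsplit i) (@splitf i).
Proof.
case=> [[x q]|[x nq]] /=; rewrite /splitf; case: bdec => q' //=.
- by congr inl; apply: val_inj.
- by exfalso; exact: (negP q') q.
- by exfalso; exact: (negP nq) q'.
- by congr inr; apply: val_inj.
Qed.

Lemma split_iso : rep_iso V (dsum (subrep Q) (subrep nQ)).
Proof.
exists splitf; split.
  by move=> i; exists (@unsplit i); [exact: splitK|exact: unsplitK].
move=> h x /=.
rewrite {2}/splitf; case: bdec => qx /=; rewrite /mpS /=; case Ex: (mp x) => [y|] //=.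
- have qy : Q y by rewrite -(closedQ Ex).
  rewrite /splitf; case: bdec => q'; last by exfalso; exact: (negP q') qy.
  case: insubP => [u _ Eu|]; last by rewrite qy.
  by congr (Some (inl _)); apply: val_inj.
- have qy : nQ y by rewrite /nQ -(closedQ Ex).
  rewrite /splitf; case: bdec => q'; first by exfalso; exact: (negP qy) q'.
  case: insubP => [u _ Eu|]; last by rewrite qy.
  by congr (Some (inr _)); apply: val_inj.
Qed.

Lemma claimA : indecomposable V -> forall i (a : sp V i), Q a -> forall j (b : sp V j), Q b.
Proof.
move=> [_ Hn] i a qa j b; case qb: (Q b) => //; exfalso; apply: Hn.
exists (subrep Q), (subrep nQ); split; last split.
- exact: subrep_nz qa.
- by apply: (@subrep_nz _ _ _ _ _ nQ j b); rewrite /nQ qb.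
- exact: split_iso.
Qed.

End Split2.

Definition pb (P : Prop) : bool := if excluded_middle_informative P then true else false.
Lemma pbE P : pb P <-> P.
Proof. by rewrite /pb; case: excluded_middle_informative. Qed.

Lemma le1_eq (T : finType) : #|T| <= 1 -> forall x y : T, x = y.
Proof. by move/card_le1_eqP => H x y; apply: H. Qed.

Section Main.
Variables (I E : finType) (s t : E -> I).
Hypothesis HQ : ~ has_cycle s t.
Variable V : F1rep s t.
Hypothesis HV : indecomposable V.

Lemma reach (x y : X V) : exists ps, ewk x ps /\ lst x ps = y.
Proof.
case: y => j b; case: x => i a0.
pose Q := fun i (c : sp V i) => pb (exists ps, ewk (tg a0) ps /\ lst (tg a0) ps = tg c).
have cQ : forall h (a : sp V (s h)) b, mp a = Some b -> Q _ a = Q _ b.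
  move=> h a b' Eab; rewrite /Q.
  have St : step h (tg a) (tg b') by exists a, b'.
  apply/idP/idP => /pbE [ps [W L]]; apply/pbE.
  - exists (rcons ps (h, tg b')); split; last by rewrite lst_rcons.
    rewrite -cats1; apply/ewk_cat; split => //=; rewrite L; split => //; by left.
  - exists (rcons ps (h, tg a)); split; last by rewrite lst_rcons.
    rewrite -cats1; apply/ewk_cat; split => //=; rewrite L; split => //; by right.
have qa : Q i a0 by rewrite /Q; apply/pbE; exists [::]; split.
by have /pbE := claimA cQ HV qa b.
Qed.

Lemma dim_le1 i : dimv V i <= 1.
Proof.
apply/card_le1_eqP => a b _ _.
have [ps [W L]] := reach (tg a) (tg b).
have := dim_walk HQ W; rewrite L => /(_ erefl) E1.
have := tagged_inj E1.
done.
Qed.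

Definition S1 := [set i | dimv V i == 1].

Lemma tag_in (z : X V) : tag z \in S1.
Proof.
case: z => i a /=; rewrite inE eqn_leq dim_le1 /=.
by apply/card_gt0P; exists a.
Qed.

Lemma walk_connect (x : X V) ps : ewk x ps -> connect (adj_in s t S1) (tag x) (tag (lst x ps)).
Proof.
elim: ps x => [|p ps IH] x /=; first by rewrite connect0.
move=> [R W]; apply: connect_trans (IH _ W); apply: connect1.
rewrite /adj_in !tag_in /=; apply/existsP; exists p.1; exact: rl_joins R.
Qed.

Lemma elt_of i : dimv V i == 1 -> {a : sp V i | true}.
Proof.
move=> H; have : 0 < #|sp V i| by rewrite -/(dimv V i) (eqP H).
by case/card_gt0P/sigW => a _; exists a.
Qed.

Lemma S1_connected : connected_in s t S1.
Proof.
move=> i j; rewrite !inE => Hi Hj.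
have [a _] := elt_of Hi; have [b _] := elt_of Hj.
have [ps [W L]] := reach (tg a) (tg b).
by have := walk_connect W; rewrite L.
Qed.

Lemma edge_bij h : dimv V (s h) = 1 -> dimv V (t h) = 1 ->
  bijective (fun x : option (sp V (s h)) => if x is Some y then mp y else None).
Proof.
move=> /eqP Hs /eqP Ht.
have [a _] := elt_of Hs; have [b _] := elt_of Ht.
have eqa := le1_eq (dim_le1 (s h)); have eqb := le1_eq (dim_le1 (t h)).
have Eab : mp a = Some b.
  have [ps [W L]] := reach (tg a) (tg b).
  have [ps' [W' L' U']] := short_walk HQ W.
  case: (boolP ((size (tgs ps') != 1) || (map fst ps' != [:: h]))) => Hc.
    exfalso; apply: HQ; apply: (cycle_of U' (ewk_wk W') _ Hc).
    by rewrite last_tgs L' L /= joinsC joins_st.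
  move: Hc; rewrite negb_or !negbK size_map => /andP[/eqP S2 /eqP M1].
  case: ps' W' L' S2 M1 {U'} => [|[f z] [|]] //= [R _] L' _ [Ef]; subst f.
  rewrite -/(lst (tg a) ps) L /lst /= in L'; subst z.
  case: R => [[a' [b' [E1 E2 E3]]]|[a' [b' [E1 E2 E3]]]].
  - by rewrite (tagged_inj E2) (tagged_inj E3).
  - by exfalso; have /= E5 := congr1 tag E2; move: (no_loop HQ h); rewrite E5 eqxx.
exists (fun y : option (sp V (t h)) => if y is Some _ then Some a else None).
- by case=> [a'|] //=; rewrite (eqa a' a) Eab.
- by case=> [b'|] //=; rewrite Eab (eqb b' b).
Qed.

End Main.

Lemma ord_bool_eq (b : bool) (x y : 'I_b) : x = y.
Proof. by apply: le1_eq; rewrite card_ord; case: b x y. Qed.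

Definition isl (A B : Type) (u : (A + B)%type) : bool := if u is inl _ then true else false.

Section Constr.
Variables (I E : finType) (s t : E -> I) (S : {set I}).

Definition repS : F1rep s t :=
  {| sp := fun i => ('I_(i \in S) : finType);
     mp := fun h _ => insub 0%N;
     mp_inj := fun h x y z _ _ => ord_bool_eq x y |}.

Lemma repS_supp : rep_support repS = S.
Proof. by apply/setP => i; rewrite inE /dimv /= card_ord; case: (i \in S). Qed.

Lemma repS_indec : S != set0 -> connected_in s t S -> indecomposable repS.
Proof.
move=> /set0Pn [i0 Hi0] HS; split.
  by exists i0; rewrite /dimv /= card_ord Hi0.
move=> [W1 [W2 [[i1 n1] [[i2 n2] [phi [Hb Hc]]]]]].
pose L i := [exists x : 'I_(i \in S), isl (phi i x)].
have Lx : forall i (x : 'I_(i \in S)), L i = isl (phi i x).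
  move=> i x; apply/existsP/idP => [[y Hy]|Hx]; last by exists x.
  by rewrite (ord_bool_eq x y).
have edgeL : forall h, s h \in S -> t h \in S -> L (s h) = L (t h).
  move=> h hs ht.
  have xs : 0 < (s h \in S) by rewrite hs.
  have yt : 0 < (t h \in S) by rewrite ht.
  pose x : 'I_(s h \in S) := Ordinal xs.
  pose y : 'I_(t h \in S) := Ordinal yt.
  rewrite (Lx _ x) (Lx _ y).
  have Emp : mp (x : sp repS (s h)) = Some (y : sp repS (t h)).
    rewrite /=; case: insubP => [u _ Eu|]; first by congr Some; apply: ord_bool_eq.
    by rewrite yt.
  have := Hc h x; rewrite Emp /=.
  case: (phi (s h) x) => [u|u] /=; case: (mp u) => [w|] //= [->] //.
have adjL : forall i j, adj_in s t S i j -> L i = L j.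
  move=> i j /and3P [Hi Hj /existsP [h J]].
  move: J; rewrite /joins => /orP[]/andP[/eqP E1 /eqP E2]; subst.
    exact: edgeL.
  by rewrite (edgeL h).
have connL : forall i j, connect (adj_in s t S) i j -> L i = L j.
  move=> i j /connectP [p Hp Ej]; subst j; elim: p i Hp => [|k p IH] i //= /andP[A P].
  by rewrite (adjL _ _ A); exact: IH.
have inS : forall i (x : 'I_(i \in S)), i \in S.
  by move=> i x; have := leq_ltn_trans (leq0n x) (ltn_ord x); rewrite lt0b.
case H0: (L i0).
- have [w _] := card_gt0P n2.
  have [g gK Kg] := Hb i2.
  pose x := g (inr w).
  have Hx : phi i2 x = inr w by rewrite Kg.
  have := Lx _ x; rewrite Hx -(connL _ _ (HS _ _ Hi0 (inS _ x))) H0 //.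
- have [w _] := card_gt0P n1.
  have [g gK Kg] := Hb i1.
  pose x := g (inl w).
  have Hx : phi i1 x = inl w by rewrite Kg.
  have := Lx _ x; rewrite Hx -(connL _ _ (HS _ _ Hi0 (inS _ x))) H0 //.
Qed.

End Constr.

Lemma mp_some (I E : finType) (s t : E -> I) (V : F1rep s t) h :
  bijective (fun x : option (sp V (s h)) => if x is Some y then mp y else None) ->
  forall a : sp V (s h), exists b, mp a = Some b.
Proof.
move=> [g gK _] a; case E1: (mp a) => [b|]; first by exists b.
by have := gK None; have := gK (Some a); rewrite /= E1 => ->.
Qed.

Section Iso.
Variables (I E : finType) (s t : E -> I).
Hypothesis HQ : ~ has_cycle s t.
Variables (V W : F1rep s t).
Hypotheses (HV : indecomposable V) (HW : indecomposable W).
Hypothesis Hsup : rep_support V = rep_support W.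

Lemma same_dim i : dimv V i = dimv W i.
Proof.
have := congr1 (fun S : {set I} => i \in S) Hsup; rewrite /= !inE.
move: (dim_le1 HQ HV i) (dim_le1 HQ HW i).
by case: (dimv V i) => [|[|]] //; case: (dimv W i) => [|[|]].
Qed.

Definition phiVW i (x : sp V i) : sp W i := enum_val (cast_ord (same_dim i) (enum_rank x)).
Definition phiWV i (x : sp W i) : sp V i := enum_val (cast_ord (esym (same_dim i)) (enum_rank x)).

Lemma iso_same : rep_iso V W.
Proof.
exists phiVW; split.
  move=> i; exists (@phiWV i) => x; apply: le1_eq;
    first [exact: (dim_le1 HQ HV i) | exact: (dim_le1 HQ HW i)].
move=> h x.
have dVs : dimv V (s h) = 1.
  apply/eqP; rewrite eqn_leq dim_le1 //=; by apply/card_gt0P; exists x.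
have dWs : dimv W (s h) = 1 by rewrite -same_dim.
have := dim_le1 HQ HV (t h); rewrite leq_eqVlt ltnS leqn0 => /orP[/eqP dVt|/eqP dVt].
- have dWt : dimv W (t h) = 1 by rewrite -same_dim.
  have [y Ey] := mp_some (edge_bij HQ HV dVs dVt) x.
  have [y' Ey'] := mp_some (edge_bij HQ HW dWs dWt) (phiVW x).
  rewrite Ey Ey' /=; congr Some; apply: le1_eq.
  exact: (dim_le1 HQ HW (t h)).
- have dWt : dimv W (t h) = 0 by rewrite -same_dim.
  case E1: (mp x) => [y|].
    have : 0 < dimv V (t h) by apply/card_gt0P; exists y.
    by rewrite dVt.
  case E2: (mp (phiVW x)) => [y|] //.
  have : 0 < dimv W (t h) by apply/card_gt0P; exists y.
  by rewrite dWt.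
Qed.

End Iso.

Lemma supp_S1 (I E : finType) (s t : E -> I) (HQ : ~ has_cycle s t) (V : F1rep s t) :
  indecomposable V -> rep_support V = [set i | dimv V i == 1].
Proof.
move=> HV; apply/setP => i; rewrite !inE.
by move: (dim_le1 HQ HV i); case: (dimv V i) => [|[|]].
Qed.

Theorem mainTheorem7 (I E : finType) (s t : E -> I) (HQ : is_tree s t) :
  (* structure of indecomposables *)
  (forall V : F1rep s t, indecomposable V ->
     [/\ forall i, dimv V i <= 1,
         connected_in s t [set i | dimv V i == 1]
       & forall h, dimv V (s h) = 1 -> dimv V (t h) = 1 ->
           bijective (fun x : option (sp V (s h)) =>
                        if x is Some y then mp y else None)])
  /\
  (* bijection: isoclasses of indecomposables <-> nonempty connected subgraphs *)
  [/\ (forall V W : F1rep s t, rep_iso V W -> rep_support V = rep_support W),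
      (forall V W : F1rep s t, indecomposable V -> indecomposable W ->
          rep_support V = rep_support W -> rep_iso V W),
      (forall V : F1rep s t, indecomposable V ->
          rep_support V != set0 /\ connected_in s t (rep_support V))
    & (forall S : {set I}, S != set0 -> connected_in s t S ->
          exists V : F1rep s t, indecomposable V /\ rep_support V = S)].
Proof.
have HQ' : ~ has_cycle s t by case: HQ.
split.
  move=> V HV; split.
  - move=> i; exact: (dim_le1 HQ' HV i).
  - exact: (S1_connected HQ' HV).
  - move=> h; exact: (edge_bij HQ' HV).
split.
- move=> V W [phi [Hb _]]; apply/setP => i; rewrite !inE /dimv.
  by rewrite (bij_eq_card (Hb i)).
- move=> V W HV HW Hs; exact: (iso_same HQ' HV HW Hs).
- move=> V HV; rewrite (supp_S1 HQ' HV); split; last exact: (S1_connected HQ' HV).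
  case: (HV) => [[i Hi] _]; apply/set0Pn; exists i; rewrite inE eqn_leq Hi.
  by rewrite (dim_le1 HQ' HV).
- move=> S HS HC; exists (repS s t S); split; [exact: repS_indec|exact: repS_supp].
Qed.
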